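(* Let $w$ be a doubly monotone contract, i.e. both $y\mapsto w(y)$ and $y\mapsto y-w(y)$ are non-decreasing on $\mathbb{R}_+$. Then either (1) $V_P(w\mid \{a_0\}) = V_P(w)$, or (2) for every $\epsilon>0$ there exists $x\in\mathbb{R}_+$ with $w(x)>r_0^w$ such that, for the project $a_1=(\delta_x,0)$ (which yields prize $x$ with certainty at zero cost), $V_P(w\mid\{a_0,a_1\}) < V_P(w)+\epsilon$.
   Context: Model. A project is a pair $a=(F,c)$ where $F$ is a probability distribution on $\mathbb{R}_+$ with finite mean and $c\ge 0$ is a cost. An agent has a finite set of projects $\mathcal{A}=\{a_i\}_{i=0}^n$, $a_i=(F_i,c_i)$, whose prizes $y_i\sim F_i$ are drawn independently. The agent searches sequentially with recall (Pandora's box search): at each stage, having observed the prizes of the projects opened so far, he either opens a not-yet-opened project $a_i$, paying $c_i$ and learning $y_i$, or stops and presents a single prize among those observed (he may always present the prize $0$, e.g. without opening any project). A contract is a measurable function $w:\mathbb{R}_+\to\mathbb{R}$ with $w(y)\ge 0$ for all $y$ (limited liability). If the agent presents prize $y$ having opened the set $S$ of projects, the (risk-neutral) agent's payoff is $w(y)-\sum_{i\in S}c_i$ and the (risk-neutral) principal's payoff is $y-w(y)$. Let $\Sigma(w,\mathcal{A})$ denote the set of search strategies maximizing the agent's expected payoff, and (ties broken in the principal's favor) $V_P(w\mid\mathcal{A})=\sup_{\sigma\in\Sigma(w,\mathcal{A})}\mathbb{E}_\sigma[y-w(y)]$, where $\mathbb{E}_\sigma$ is expectation over the presented prize. The principal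 knows only one project $a_0=(F_0,c_0)$ of the agent; her payoff guarantee from $w$ is $V_P(w)=\inf_{\mathcal{A}\supseteq\{a_0\}}V_P(w\mid\mathcal{A})$, the infimum over all finite sets of projects containing $a_0$. The $w$-induced index of $a_0$, $r_0^w$, is the smallest solution $r$ of $c_0=\int [w(y)-r]^+\,dF_0(y)$. $\delta_x$ denotes the Dirac mass at $x$. *)

(* Defs.v *)
From HB Require Import structures.
From mathcomp Require Import all_boot all_order all_algebra.
From mathcomp Require Import all_classical all_reals all_analysis.
From mathcomp Require Import measurable_realfun lebesgue_integral.
Set Implicit Arguments. Unset Strict Implicit. Unset Printing Implicit Defensive.
Import Order.TTheory GRing.Theory Num.Theory.
Local Open Scope classical_set_scope.
Local Open Scope ring_scope.

Section PandoraDefs.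
Variable R : realType.

Record project := Project { pdist : probability R R ; pcost : R }.

Definition valid_project (a : project) : Prop :=
  [/\ pdist a [set y | y < 0] = 0%E,
      (pdist a).-integrable setT (fun y => y%:E)
    & 0 <= pcost a].

Definition dirac_project (x : R) : project := Project (\d_x : probability R R) 0.

Inductive action (N : nat) := Open of 'I_N | Stop of R.

(* A (deterministic, history dependent) search strategy: a history is the
   sequence of (project opened, prize observed) pairs, in opening order. *)
Definition strategy (N : nat) := seq ('I_N * R) -> action N.

(* Expected payoff of strategy s, where the final presented prize x yields
   g x and opening project i costs c i; k is the fuel (number of further
   openings allowed; N is always enough).  Infeasible actions (opening an
   already-opened project, presenting an unobserved nonzero prize) are read
   as "stop and present 0".  The expectation is the iterated (sequential)
   expectation over the independent prizes. *)
Fixpoint payoff (N : nat) (A : 'I_N -> project) (g : R -> R) (c : 'I_N -> R)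
    (s : strategy N) (k : nat) (h : seq ('I_N * R)) {struct k} : \bar R :=
  match s h with
  | Stop x => if (x == 0) || (x \in map snd h) then (g x)%:E else (g 0)%:E
  | Open i =>
      if i \in map fst h then (g 0)%:E else
      match k with
      | 0 => (g 0)%:E
      | k'.+1 =>
          (\int[pdist (A i)]_z payoff A g c s k' (rcons h (i, z)) - (c i)%:E)%E
      end
  end.

Definition agent_payoff (w : R -> R) N (A : 'I_N -> project) (s : strategy N) :=
  payoff A w (fun i => pcost (A i)) s N [::].

Definition principal_payoff (w : R -> R) N (A : 'I_N -> project) (s : strategy N) :=
  payoff A (fun y => y - w y) (fun=> 0) s N [::].

(* Admissible strategies: every one-step conditional expectation used in the
   payoff recursion is the integral of a measurable function. *)
Definition admissible (w : R -> R) N (A : 'I_N -> project) (s : strategy N) :=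
  forall k h i,
    measurable_fun [set: R]
      (fun z : R => payoff A w (fun j => pcost (A j)) s k (rcons h (i, z)) : \bar R) /\
    measurable_fun [set: R]
      (fun z : R => payoff A (fun y => y - w y) (fun=> 0) s k (rcons h (i, z)) : \bar R).

Definition agent_optimal (w : R -> R) N (A : 'I_N -> project) (s : strategy N) :=
  admissible w A s /\
  forall t, admissible w A t -> (agent_payoff w A t <= agent_payoff w A s)%E.

(* V_P(w | A), ties broken in the principal's favour. *)
Definition VP_given (w : R -> R) N (A : 'I_N -> project) : \bar R :=
  ereal_sup [set principal_payoff w A s | s in agent_optimal w A].

(* V_P(w): infimum over all finite families of projects containing a0
   (a0 placed at index 0). *)
Definition VP (w : R -> R) (a0 : project) : \bar R :=
  ereal_inf [set v | exists n (A : 'I_n.+1 -> project),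
     [/\ forall i, valid_project (A i), A ord0 = a0 & v = VP_given w A]].

Definition is_index (w : R -> R) (a0 : project) (r : R) : Prop :=
  (pcost a0)%:E = (\int[pdist a0]_y (Num.max (w y - r) 0)%:E)%E /\
  forall r', (pcost a0)%:E = (\int[pdist a0]_y (Num.max (w y - r') 0)%:E)%E ->
             r <= r'.

Definition single (a0 : project) : 'I_1 -> project := fun=> a0.
Definition pair (a0 a1 : project) : 'I_2 -> project :=
  fun i => if i == ord0 then a0 else a1.

Definition doubly_monotone (w : R -> R) : Prop :=
  forall y y', 0 <= y -> y <= y' -> w y <= w y' /\ y - w y <= y' - w y'.

End PandoraDefs.

(* Main.v *)
Require Import Defs.
From HB Require Import structures.
From mathcomp Require Import all_boot all_order all_algebra.
From mathcomp Require Import all_classical all_reals all_analysis.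
From mathcomp Require Import measurable_realfun lebesgue_integral.
From mathcomp Require Import lra.
Import Order.TTheory GRing.Theory Num.Theory.
Local Open Scope classical_set_scope.
Local Open Scope ring_scope.

Section Gen.
Variable R : realType.
Local Open Scope ereal_scope.

Lemma PL (P : probability R R) (f : R -> \bar R) :
  measurable_fun setT f ->
  measurable_fun setT (fun X : R => \int[P]_z f (Num.max X z)).
Proof.
move=> mf.
have mF : measurable_fun setT (fun p : R * R => f (Num.max p.1 p.2)).
  apply: measurableT_comp => //.
  apply: measurable_maxr; [exact: measurable_fst | exact: measurable_snd].
rewrite [X in measurable_fun _ X](_ : _ = (fun X => \int[P]_z (fun p : R * R => f (Num.max p.1 p.2))^\+ (X, z)) \- (fun X => \int[P]_z (fun p : R * R => f (Num.max p.1 p.2))^\- (X, z))).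
  apply: emeasurable_funB.
  - apply: (measurable_fun_fubini_tonelli_F (m2 := P)) => //.
    exact: measurable_funepos.
  - apply: (measurable_fun_fubini_tonelli_F (m2 := P)) => //.
    exact: measurable_funeneg.
apply/funext => X; rewrite [LHS]integralE.
by congr (_ - _); apply: eq_integral => z _; rewrite !(funeposE, funenegE).
Qed.

Lemma negs_meas : measurable [set y : R | (y < 0)%R].
Proof.
have -> : [set y : R | (y < 0)%R] = (`]-oo, 0%R[%classic)%R.
  by apply/seteqP; split => y /=; rewrite in_itv.
exact: measurable_itv.
Qed.

Lemma LEAE (P : probability R R) (f g : R -> \bar R) :
  P [set y | (y < 0)%R] = 0 ->
  measurable_fun setT f -> measurable_fun setT g ->
  (forall z, (0 <= z)%R -> f z <= g z) ->
  \int[P]_z f z <= \int[P]_z g z.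
Proof.
move=> P0 mf mg fg; rewrite (integralE _ _ f) (integralE _ _ g).
have ae (h1 h2 : R -> \bar R) : (forall z, (0 <= z)%R -> h1 z <= h2 z) ->
    {ae P, forall x, setT x -> h1 x <= h2 x}.
  move=> h12; exists [set y : R | (y < 0)%R]; split => //; first exact: negs_meas.
  move=> y /=; apply: contra_notP => /negP; rewrite -leNgt => y0 _; exact: h12.
apply: leeB.
- apply: ae_ge0_le_integral => //; try by move=> x _; exact: funepos_ge0.
  + exact: measurable_funepos.
  + exact: measurable_funepos.
  + apply: ae => z z0; apply: (@funepos_le _ _ [set z | (0 <= z)%R]) => //.
    by move=> x; rewrite inE /= => /fg.
    by rewrite inE.
- apply: ae_ge0_le_integral => //; try by move=> x _; exact: funeneg_ge0.
  + exact: measurable_funeneg.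
  + exact: measurable_funeneg.
  + apply: ae => z z0; apply: (@funeneg_le _ _ [set z | (0 <= z)%R]) => //.
    by move=> x; rewrite inE /= => /fg.
    by rewrite inE.
Qed.


Lemma meas_cases (I : finType) (sel : R -> option I) (f g0 : R -> \bar R)
   (gi : I -> R -> \bar R) :
  (forall o, measurable [set x | sel x = o]) -> measurable_fun setT g0 ->
  (forall i, measurable_fun setT (gi i)) ->
  (forall x, f x = match sel x with Some i => gi i x | None => g0 x end) ->
  measurable_fun setT f.
Proof.
move=> ms mg0 mgi fE _ B mB; rewrite setTI.
have -> : f @^-1` B = ([set x | sel x = None] `&` (g0 @^-1` B)) `|`
    \bigcup_(i in [set: I]) ([set x | sel x = Some i] `&` (gi i @^-1` B)).
  apply/seteqP; split => x /=.
    rewrite fE; case E: (sel x) => [i|] Bx; last by left.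
    by right; exists i.
  by move=> [[E Bx]|[i _ [E Bx]]]; rewrite fE E.
apply: measurableU.
  by apply: measurableI => //; rewrite -[X in measurable X]setTI; exact: mg0.
apply: fin_bigcup_measurable; first exact: finite_finset.
move=> i _; apply: measurableI => //.
by rewrite -[X in measurable X]setTI; exact: mgi.
Qed.

Lemma meas_bool (b : R -> bool) : measurable [set x | b x] ->
  forall v, measurable [set x | b x = v].
Proof.
move=> mb [|].
  by rewrite [X in measurable X](_ : _ = [set x | b x]).
rewrite [X in measurable X](_ : _ = ~` [set x | b x]); first exact: measurableC.
by apply/seteqP; split => x /=; case: (b x).
Qed.


Lemma bigmaxe_meas (I : eqType) (r : seq I) (p : pred I) (F : I -> R -> \bar R) :
  (forall i, measurable_fun setT (F i)) ->
  measurable_fun setT (fun X => \big[maxe/-oo]_(i <- r | p i) F i X).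
Proof.
move=> mF; elim: r => [|j r IH].
  by under eq_fun do rewrite big_nil; exact: measurable_cst.
under eq_fun do rewrite big_cons; case: (p j) => //.
exact: measurable_maxe.
Qed.

Lemma meas_EFw (w : R -> R) : measurable_fun setT w ->
  measurable_fun setT (fun X : R => (w (Num.max X 0%R))%:E).
Proof.
move=> mw; apply/measurable_EFinP; apply: measurableT_comp => //.
by apply: measurable_maxr => //; exact: measurable_cst.
Qed.

Lemma meas_constP (Q : Prop) : measurable [set _ : R | Q].
Proof.
case: (pselect Q) => q.
  by rewrite [X in measurable X](_ : _ = setT)//; apply/seteqP; split.
by rewrite [X in measurable X](_ : _ = set0)//; apply/seteqP; split.
Qed.

Lemma int_cst (P : probability R R) (m : \bar R) : \int[P]_z (cst m) z = m.
Proof. rewrite integral_cst // -[in RHS](mule1 m); congr (m * _).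
exact: probability_setT.
Qed.

Lemma LEAE_cst_l (P : probability R R) (m : \bar R) (g : R -> \bar R) :
  P [set y | (y < 0)%R] = 0 -> measurable_fun setT g ->
  (forall z, (0 <= z)%R -> m <= g z) -> m <= \int[P]_z g z.
Proof.
move=> P0 mg H; rewrite -[X in X <= _](int_cst P).
apply: LEAE => //; exact: measurable_cst.
Qed.

End Gen.

Section Pandora.
Variable R : realType.
Variable w : R -> R.
Hypothesis mw : measurable_fun setT w.
Variable N : nat.
Variable A : 'I_N -> project R.
Hypothesis Aneg : forall i, pdist (A i) [set y | y < 0] = 0%E.
Local Notation P i := (pdist (A i)).
Local Notation c i := (pcost (A i)).
Local Open Scope ereal_scope.

Definition Sof (h : seq ('I_N * R)) : {set 'I_N} := [set i | i \in map fst h].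
Definition Xof (h : seq ('I_N * R)) : R := foldl (fun a p => Num.max a p.2) 0%R h.

Fixpoint U k (S : {set 'I_N}) (X : R) : \bar R := match k with
 | 0 => (w (Num.max X 0))%:E
 | k.+1 => maxe (w (Num.max X 0))%:E
     (\big[maxe/-oo]_(i | i \notin S) (\int[P i]_z U k (i |: S) (Num.max X z) - (c i)%:E))
 end.

Definition G k (S : {set 'I_N}) (X : R) (i : 'I_N) := \int[P i]_z U k (i |: S) (Num.max X z) - (c i)%:E.
Definition Gmax k (S : {set 'I_N}) (X : R) := \big[maxe/-oo]_(i | i \notin S) G k S X i.
Lemma U_S k S X : U k.+1 S X = maxe (w (Num.max X 0))%:E (Gmax k S X).
Proof. by []. Qed.

Definition kS (S : {set 'I_N}) := (N - #|S|)%N.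
Definition stopb (S : {set 'I_N}) (X : R) : bool :=
  (kS S == 0)%N || ((w (Num.max X 0))%:E > Gmax (kS S).-1 S X).
Definition pb (S : {set 'I_N}) (X : R) (i : 'I_N) := (i \notin S) && (G (kS S).-1 S X i == Gmax (kS S).-1 S X).
Definition bestl S l X : option 'I_N :=
  foldr (fun i acc => if pb S X i then Some i else acc) None l.
Definition best S X := bestl S (enum 'I_N) X.
Definition sel S X := if stopb S X then None else best S X.
Definition sstar : strategy R N := fun h =>
  match sel (Sof h) (Xof h) with Some i => Open R i | None => Stop N (Xof h) end.

Fixpoint Phi (g : R -> R) (cc : 'I_N -> R) k S X : \bar R :=
  match sel S X with
  | None => (g (Num.max X 0))%:E
  | Some i => match k with
     | 0 => (g 0)%:E
     | k.+1 => \int[P i]_z Phi g cc k (i |: S) (Num.max X z) - (cc i)%:E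
     end
  end.

Lemma Xof_rcons h i z : Xof (rcons h (i, z)) = Num.max (Xof h) z.
Proof. by rewrite /Xof foldl_rcons. Qed.

Lemma Sof_rcons h i z : Sof (rcons h (i, z)) = i |: Sof h.
Proof. by apply/setP => j; rewrite !inE map_rcons mem_rcons in_cons. Qed.

Lemma Xof_ge0 h : (0 <= Xof h)%R.
Proof.
elim/last_ind: h => [|h [i z] IH]; first by rewrite /Xof.
by rewrite Xof_rcons le_max IH.
Qed.

Lemma Xof_mem h : (Xof h == 0%R) || (Xof h \in map snd h).
Proof.
elim/last_ind: h => [|h [i z] IH]; first by rewrite /Xof eqxx.
rewrite Xof_rcons map_rcons mem_rcons in_cons /=.
case: (leP (Xof h) z) => hz.
  by rewrite eqxx !orbT.
by case/orP: IH => [->//|->]; rewrite !orbT.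
Qed.

Lemma Xof_ub h x : x \in map snd h -> (x <= Xof h)%R.
Proof.
elim/last_ind: h => [//|h [i z] IH].
rewrite Xof_rcons map_rcons mem_rcons in_cons => /orP[/eqP->|/IH]; rewrite le_max.
  by rewrite lexx orbT.
by move=> ->.
Qed.

Arguments Xof_ub {h x}.

Lemma bestl_spec S l X i : bestl S l X = Some i -> pb S X i.
Proof.
elim: l => [//|j l IH] /=; case E: (pb S X j); last exact: IH.
by case=> <-.
Qed.

Lemma sel_notin S X i : sel S X = Some i -> i \notin S.
Proof.
rewrite /sel; case: (stopb S X) => //; rewrite /best => /bestl_spec.
by case/andP.
Qed.

Lemma payoff_sstar g cc k h :
  payoff A g cc sstar k h = Phi g cc k (Sof h) (Xof h).
Proof.
elim: k h => [|k IH] h /=; rewrite /sstar;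
  case E: (sel (Sof h) (Xof h)) => [i|].
- move: (E) => /sel_notin; rewrite inE => /negbTE -> //.
- by rewrite Xof_mem (max_idPl (Xof_ge0 h)).
- move: (E) => /sel_notin; rewrite inE => /negbTE ->.
  congr (_ + _); apply: eq_integral => z _.
  by have := IH (rcons h (i, z)); rewrite Xof_rcons Sof_rcons.
- by rewrite Xof_mem (max_idPl (Xof_ge0 h)).
Qed.


Lemma U_meas k S : measurable_fun setT (U k S).
Proof.
elim: k S => [|k IH] S /=; first exact: meas_EFw.
apply: measurable_maxe; first exact: meas_EFw.
apply: bigmaxe_meas => i.
apply: emeasurable_funD; [exact: PL | exact: measurable_cst].
Qed.

Lemma G_meas k S i : measurable_fun setT (fun X => G k S X i).
Proof.
apply: emeasurable_funD; [apply: PL; exact: U_meas | exact: measurable_cst].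
Qed.

Lemma Gmax_meas k S : measurable_fun setT (Gmax k S).
Proof. by apply: bigmaxe_meas => i; exact: G_meas. Qed.

Lemma stop_meas S : measurable [set X | stopb S X].
Proof.
rewrite /stopb; case: (kS S == 0)%N => /=.
  exact: meas_constP.
rewrite -[X in measurable X]setTI; apply: measurable_lte => //.
  exact: Gmax_meas.
exact: meas_EFw.
Qed.

Lemma pb_meas S i : measurable [set X | pb S X i].
Proof.
rewrite /pb; case: (i \notin S) => /=; last first.
  exact: meas_constP.
rewrite [X in measurable X](_ : _ = setT `&` [set X | G (kS S).-1 S X i = Gmax (kS S).-1 S X]).
  apply: measurable_eqe => //; [exact: G_meas | exact: Gmax_meas].
by apply/seteqP; split => X /=; [move/eqP|move=> [_ /eqP]].
Qed.

Lemma best_meas S o : measurable [set X | best S X = o].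
Proof.
rewrite /best; elim: (enum 'I_N) o => [|j l IH] o /=.
  exact: meas_constP.
rewrite [X in measurable X](_ : _ = ([set X | pb S X j] `&` [set _ | Some j = o])
   `|` (~` [set X | pb S X j] `&` [set X | bestl S l X = o])).
  apply: measurableU; apply: measurableI => //.
  - exact: pb_meas.
  - exact: meas_constP.
  - apply: measurableC; exact: pb_meas.
apply/seteqP; split => X /=; case: (pb S X j) => //=.
- by left.
- by right.
- by case=> [[]|[]].
- by case=> [[]|[_]].
Qed.

Lemma sel_meas S o : measurable [set X | sel S X = o].
Proof.
rewrite /sel; rewrite [X in measurable X](_ : _ = ([set X | stopb S X] `&` [set _ | None = o])
   `|` (~` [set X | stopb S X] `&` [set X | best S X = o])).
  apply: measurableU; apply: measurableI => //.
  - exact: stop_meas.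
  - exact: meas_constP.
  - apply: measurableC; exact: stop_meas.
  - exact: best_meas.
apply/seteqP; split => X /=; case: (stopb S X) => //=.
- by left.
- by right.
- by case=> [[]|[]].
- by case=> [[]|[_]].
Qed.

Lemma Phi_meas g cc k S : measurable_fun setT g ->
  measurable_fun setT (Phi g cc k S).
Proof.
move=> mg; elim: k S => [|k IH] S.
  apply: (@meas_cases _ _ (sel S) _ (fun X => (g (Num.max X 0))%:E) (fun i _ => (g 0%R)%:E)).
  - exact: sel_meas.
  - exact: meas_EFw.
  - by move=> i; exact: measurable_cst.
  - by move=> X /=; case: (sel S X).
apply: (@meas_cases _ _ (sel S) _ (fun X => (g (Num.max X 0))%:E)
   (fun i X => \int[P i]_z Phi g cc k (i |: S) (Num.max X z) - (cc i)%:E)).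
- exact: sel_meas.
- exact: meas_EFw.
- by move=> i; apply: emeasurable_funD; [apply: PL; exact: IH | exact: measurable_cst].
- by move=> X /=; case: (sel S X).
Qed.

Lemma sstar_adm : admissible w A sstar.
Proof.
have mpsi : measurable_fun setT (fun y : R => y - w y)%R.
  by apply: measurable_funB => //; exact: measurable_id.
move=> k h i; split.
- under eq_fun do rewrite payoff_sstar Sof_rcons Xof_rcons.
  apply: measurableT_comp; first exact: Phi_meas.
  by apply: measurable_maxr.
- under eq_fun do rewrite payoff_sstar Sof_rcons Xof_rcons.
  apply: measurableT_comp; first exact: Phi_meas.
  by apply: measurable_maxr.
Qed.


Hypothesis wmono : forall y y', (0 <= y)%R -> (y <= y')%R -> (w y <= w y')%R.

Lemma Ugew k S X : (w (Num.max X 0))%:E <= U k S X.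
Proof. by case: k => [|k] /=; rewrite ?lexx // le_max lexx. Qed.

Lemma kS_set1 (S : {set 'I_N}) i : i \notin S -> kS (i |: S) = (kS S).-1.
Proof. by move=> iS; rewrite /kS cardsU1 iS add1n subnS. Qed.

Lemma sel_nstop S X i : sel S X = Some i -> ~~ stopb S X.
Proof. by rewrite /sel; case: (stopb S X). Qed.

Lemma sel_pb S X i : sel S X = Some i -> pb S X i.
Proof. by rewrite /sel; case: (stopb S X) => // /bestl_spec. Qed.

Arguments sel_nstop {S X i}.
Arguments sel_pb {S X i}.

Lemma bestl_none S l X : bestl S l X = None -> forall j, j \in l -> ~~ pb S X j.
Proof.
elim: l => [//|j l IH] /=; case E: (pb S X j) => // /IH H k.
by rewrite in_cons => /orP[/eqP->|/H]; rewrite ?E.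
Qed.

Lemma best_some S X : ~~ stopb S X -> exists i, best S X = Some i.
Proof.
rewrite /stopb negb_or => /andP[kS0 _].
have : (0 < #|~: S|)%N.
  move: kS0; rewrite /kS; have := cardsC S; rewrite card_ord.
  move: #|~: S| #|S| => m s <-.
  by rewrite addKn lt0n.
case/card_gt0P => i0; rewrite inE => i0S.
case E: (best S X) => [i|]; first by exists i.
have [j jS Gj] := @eq_bigmax _ _ _ -oo i0 (fun i => i \notin S)
   (fun i => G (kS S).-1 S X i) i0S (fun _ _ => leNye _).
have := @bestl_none S _ X E j (mem_enum _ j); rewrite /pb -/(Gmax (kS S).-1 S X).
rewrite /Gmax Gj eqxx andbT; move: jS; rewrite unfold_in => ->.
by [].
Qed.

Lemma Phi_agent k S X : k = kS S -> (0 <= X)%R ->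
  Phi w (fun i => pcost (A i)) k S X = U k S X.
Proof.
elim: k S X => [|k IH] S X hk X0 /=; case E: (sel S X) => [i|] //.
- by move: (sel_nstop E); rewrite /stopb -hk.
- have /andP[iS /eqP Gi] := sel_pb E.
  have kk : (kS S).-1 = k by rewrite -hk.
  rewrite -/(Gmax k S X) -kk -Gi kk /G.
  have -> : \int[P i]_z Phi w (fun i => pcost (A i)) k (i |: S) (Num.max X z) =
            \int[P i]_z U k (i |: S) (Num.max X z).
    apply: eq_integral => z _; apply: IH; first by rewrite kS_set1 // -hk.
    by rewrite le_max X0.
  apply/esym/max_idPr; move: (sel_nstop E); rewrite /stopb -hk /= -leNgt.
  by rewrite -/(Gmax _ S X) -kk -Gi kk.
- rewrite -/(Gmax k S X); move: E; rewrite /sel.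
  case St: (stopb S X); last by case: (@best_some S X (negbT St)) => j ->.
  move=> _; apply/esym/max_idPl/ltW; move: St; rewrite /stopb -hk /=.
  by rewrite -/(Gmax _ S X).
Qed.

Lemma U_upper t : admissible w A t -> forall k h, all (fun p => 0 <= p.2)%R h ->
  payoff A w (fun i => pcost (A i)) t k h <= U k (Sof h) (Xof h).
Proof.
move=> adm; have w0X h : (w 0 <= w (Num.max (Xof h) 0))%R.
  by apply: wmono => //; rewrite le_max lexx orbT.
have wxX h x : all (fun p => 0 <= p.2)%R h -> (x == 0%R) || (x \in map snd h) ->
    (w x <= w (Num.max (Xof h) 0))%R.
  move=> hn /orP[/eqP->//|xh]; apply: wmono.
    by move: hn => /allP; move: xh => /mapP[[j z] jz ->] /(_ _ jz).
  by rewrite le_max (Xof_ub xh).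
elim=> [|k IH] h hn /=; case: (t h) => [i|x].
- by case: ifP => _; rewrite lee_fin.
- by case: ifP => xh; rewrite lee_fin //; exact: wxX.
- case: ifP => ih.
    by rewrite le_max lee_fin w0X.
  rewrite le_max; apply/orP; right.
  apply: le_trans (_ : G k (Sof h) (Xof h) i <= _).
    apply: leeD => //; apply: LEAE => //.
    + by case: (adm k h i).
    + apply: measurableT_comp; first exact: U_meas.
      by apply: measurable_maxr.
    + move=> z z0; have := IH (rcons h (i, z)); rewrite Xof_rcons Sof_rcons; apply.
      by rewrite all_rcons /= z0.
  apply: le_bigmax_cond.
  by rewrite inE ih.
- by case: ifP => xh; rewrite le_max lee_fin ?w0X ?wxX ?orbT.
Qed.

Lemma Sof_nil : Sof [::] = finset.set0.
Proof. by apply/setP => i; rewrite !inE. Qed.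

Lemma sstar_opt : agent_optimal w A sstar.
Proof.
split; first exact: sstar_adm.
move=> t adm; rewrite /agent_payoff payoff_sstar.
rewrite (@Phi_agent N); last 2 first.
- by rewrite /kS Sof_nil cards0 subn0.
- exact: Xof_ge0.
exact: U_upper.
Qed.


Section Princ.
Variable a0 : project R.
Variable i0 : 'I_N.
Hypothesis Ai0 : A i0 = a0.
Hypothesis wpos : forall y, (0 <= y)%R -> (0 <= w y)%R.
Hypothesis psimono : forall y y', (0 <= y)%R -> (y <= y')%R -> (y - w y <= y' - w y')%R.

Definition psi (y : R) := (y - w y)%R.
Definition Jf (X : R) := \int[pdist a0]_y (psi (Num.max X y))%:E.
Definition phi (r : R) := \int[pdist a0]_y (Num.max (w y - r) 0)%:E.
Definition Cset := [set x : R | (0 <= x)%R /\ phi (w x) < (pcost a0)%:E].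
Definition Iv := ereal_inf [set (psi x)%:E | x in Cset].

Lemma a0neg : pdist a0 [set y | (y < 0)%R] = 0.
Proof. by rewrite -Ai0; exact: Aneg. Qed.

Lemma mpsi : measurable_fun setT psi.
Proof. by apply: measurable_funB => //; exact: measurable_id. Qed.

Lemma Kmax X : (0 <= X)%R ->
  \int[pdist a0]_y (w (Num.max X y))%:E = (w X)%:E + phi (w X).
Proof.
move=> X0.
have m1 : measurable_fun setT (fun y => (w (Num.max X y))%:E).
  apply/measurable_EFinP; apply: measurableT_comp => //.
  by apply: measurable_maxr.
have m2 : measurable_fun setT (fun y => (Num.max (w y - w X) 0)%:E).
  apply/measurable_EFinP; apply: measurable_maxr => //.
  by apply: measurable_funB => //; exact: measurable_cst.
have -> : \int[pdist a0]_y (w (Num.max X y))%:E =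
    \int[pdist a0]_y ((cst (w X)%:E) y + (Num.max (w y - w X) 0)%:E).
  have E y : (0 <= y)%R -> (w (Num.max X y))%:E = (cst (w X)%:E) y + (Num.max (w y - w X) 0)%:E.
    move=> y0 /=; rewrite -EFinD; congr (_%:E).
    case: (leP X y) => Xy.
      have -> : Num.max (w y - w X)%R 0%R = (w y - w X)%R by apply/max_idPl; rewrite subr_ge0 wmono.
      by rewrite addrC subrK.
    have -> : Num.max (w y - w X)%R 0%R = 0%R by apply/max_idPr; rewrite subr_le0 wmono // ltW.
    by rewrite addr0.
  have m3 : measurable_fun setT (fun y => (cst (w X)%:E) y + (Num.max (w y - w X) 0)%:E).
    by apply: emeasurable_funD => //; exact: measurable_cst.
  by apply/le_anti/andP; split; apply: LEAE => //; try exact: a0neg;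
    move=> z z0; rewrite E.
rewrite ge0_integralD //.
- by rewrite int_cst.
- by move=> y _ /=; rewrite lee_fin wpos.
- by move=> y _; rewrite lee_fin le_max lexx orbT.
Qed.


Lemma mpsimax (X : R) : measurable_fun setT (fun y : R => (psi (Num.max X y))%:E).
Proof.
apply/measurable_EFinP; apply: measurableT_comp; first exact: mpsi.
by apply: measurable_maxr.
Qed.

Lemma Jf_mono X X' : (0 <= X)%R -> (X <= X')%R -> Jf X <= Jf X'.
Proof.
move=> X0 XX; apply: LEAE; [exact: a0neg|exact: mpsimax|exact: mpsimax|].
move=> y y0; rewrite lee_fin; apply: psimono.
  by rewrite le_max X0.
by apply: le_max2.
Qed.

Lemma kS0_in (S : {set 'I_N}) : kS S = 0%N -> i0 \in S.
Proof.
rewrite /kS => h; apply/negPn/negP => iS.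
have := max_card (mem (i0 |: S)); rewrite cardsU1 iS card_ord add1n => hh.
by move: h; move/eqP; rewrite subn_eq0 leqNgt hh.
Qed.

Lemma sel_none_stop (S : {set 'I_N}) X : sel S X = None -> stopb S X.
Proof.
rewrite /sel; case St: (stopb S X) => //.
by case: (@best_some S X (negbT St)) => j ->.
Qed.

Lemma stop_Cset (S : {set 'I_N}) X : (0 <= X)%R -> i0 \notin S -> stopb S X -> Cset X.
Proof.
move=> X0 iS; rewrite /stopb; case: eqP => [/kS0_in|_] /=; first by rewrite (negbTE iS).
rewrite (max_idPl X0) => lt; split => //.
have : G (kS S).-1 S X i0 < (w X)%:E.
  apply: le_lt_trans lt; apply: le_bigmax_cond; exact: iS.
rewrite /G Ai0 => H.
have : (w X)%:E + phi (w X) - (pcost a0)%:E < (w X)%:E.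
  apply: le_lt_trans H; apply: leeD => //; rewrite -Kmax //.
  apply: LEAE; first exact: a0neg.
  - apply/measurable_EFinP; apply: measurableT_comp => //; exact: measurable_maxr.
  - apply: measurableT_comp; first exact: U_meas.
    exact: measurable_maxr.
  - move=> z z0; apply: le_trans (Ugew _ _ _); rewrite lee_fin.
    have -> : Num.max (Num.max X z) 0%R = Num.max X z by apply/max_idPl; rewrite le_max X0.
    exact: lexx.
by rewrite lteBlDr // lteD2lE.
Qed.

Lemma Phi_princ k S X : k = kS S -> (0 <= X)%R ->
  (i0 \in S -> (psi X)%:E <= Phi psi (fun=> 0%R) k S X) /\
  (i0 \notin S -> forall m, m <= Jf X -> m <= Iv -> m <= Phi psi (fun=> 0%R) k S X).
Proof.
elim: k S X => [|k IH] S X hk X0 /=; case E: (sel S X) => [i|].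
- by move: (sel_nstop E); rewrite /stopb -hk.
- rewrite (max_idPl X0); split => [_|iS m _ hI]; first exact: lexx.
  apply: le_trans hI _; apply: ereal_inf_lbound; exists X => //.
  exact: (@stop_Cset S X X0 iS (@sel_none_stop S X E)).
- have /andP[iS _] := sel_pb E.
  have IH' z : (i0 \in i |: S -> (psi (Num.max X z))%:E <=
      Phi psi (fun=> 0%R) k (i |: S) (Num.max X z)) /\
    (i0 \notin i |: S -> forall m, m <= Jf (Num.max X z) -> m <= Iv ->
      m <= Phi psi (fun=> 0%R) k (i |: S) (Num.max X z)).
    apply: IH; first by rewrite kS_set1 // -hk.
    by rewrite le_max X0.
  have mPhi : measurable_fun setT (fun z => Phi psi (fun=> 0%R) k (i |: S) (Num.max X z)).
    apply: measurableT_comp; first by apply: Phi_meas; exact: mpsi.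
    exact: measurable_maxr.
  rewrite oppr0 adde0; split => [iS0|iS0 m hm hI].
    apply: LEAE_cst_l => // z z0.
    apply: le_trans (proj1 (IH' z) _); last by rewrite in_setU1 iS0 orbT.
    by rewrite lee_fin; apply: psimono => //; rewrite le_max lexx.
  case: (i =P i0) => [ii|ne].
    apply: le_trans hm _; move: mPhi IH'; rewrite ii => mPhi IH'.
    have -> : P i0 = pdist a0 by rewrite Ai0.
    apply: LEAE; [exact: a0neg|exact: mpsimax|exact: mPhi|].
    by move=> z z0; apply: (proj1 (IH' z)); rewrite in_setU1 eqxx.
  apply: LEAE_cst_l => // z z0; apply: (proj2 (IH' z)) => //.
    by rewrite in_setU1 negb_or iS0 andbT; apply/eqP => /esym.
  apply: (le_trans hm); apply: Jf_mono => //; by rewrite le_max lexx.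
- have -> : Num.max X 0%R = X by apply/max_idPl.
  split => [_|iS m _ hI]; first exact: lexx.
  apply: le_trans hI _; apply: ereal_inf_lbound; exists X => //.
  exact: (@stop_Cset S X X0 iS (@sel_none_stop S X E)).
Qed.


Lemma VPgiven_ge : mine (Jf 0) Iv <= VP_given w A.
Proof.
apply: le_trans (_ : principal_payoff w A sstar <= _); last first.
  by apply: ereal_sup_ubound; exists sstar => //; exact: sstar_opt.
rewrite /principal_payoff payoff_sstar Sof_nil.
have [_ H] := @Phi_princ N finset.set0 (Xof [::]) (esym (eq_trans (congr1 (subn N) (cards0 _)) (subn0 N))) (Xof_ge0 _).
apply: H; first by rewrite inE.
- by rewrite ge_min lexx.
- by rewrite ge_min lexx orbT.
Qed.

End Princ.

End Pandora.

Section Final.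
Variable R : realType.
Variables (a0 : project R) (w : R -> R).
Hypothesis va0 : valid_project a0.
Hypothesis mw : measurable_fun setT w.
Hypothesis wpos : forall y, (0 <= y)%R -> (0 <= w y)%R.
Hypothesis dm : doubly_monotone w.
Local Open Scope ereal_scope.

Let wmono : forall y y', (0 <= y)%R -> (y <= y')%R -> (w y <= w y')%R.
Proof. by move=> y y' y0 yy; case: (dm y y' y0 yy). Qed.
Let psimono : forall y y', (0 <= y)%R -> (y <= y')%R -> (y - w y <= y' - w y')%R.
Proof. by move=> y y' y0 yy; case: (dm y y' y0 yy). Qed.
Let a0neg : pdist a0 [set y | (y < 0)%R] = 0.
Proof. by case: va0. Qed.


Lemma VP_le_single : VP w a0 <= VP_given w (single a0).
Proof.
apply: ereal_inf_lbound; exists 0%N, (single a0); split => //.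
Qed.

Lemma single_le : VP_given w (single a0) <= Jf R w a0 0.
Proof.
apply: ge_ereal_sup => _ [s [adm _] <-].
have mpsi : measurable_fun setT (fun y : R => (y - w y)%R).
  by apply: measurable_funB => //; exact: measurable_id.
have Jge : ((0 - w 0)%R)%:E <= Jf R w a0 0.
  apply: LEAE_cst_l => //.
    apply/measurable_EFinP; apply: measurableT_comp => //; exact: measurable_maxr.
  by move=> z z0; rewrite lee_fin; apply: psimono => //; rewrite le_max lexx.
rewrite /principal_payoff /=; case: (s [::]) => [i|x] /=.
- rewrite oppr0 adde0; apply: LEAE => //.
  + by case: (adm 0%N [::] i).
  + apply/measurable_EFinP; apply: measurableT_comp => //; exact: measurable_maxr.
  move=> z z0; have -> : Num.max 0%R z = z by apply/max_idPr.
  case: (s [:: (i, z)]) => [j|y] /=.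
    by case: ifP => _; rewrite lee_fin; apply: psimono.
  case: ifP => [/orP[/eqP->|]|_]; rewrite ?lee_fin; try by apply: psimono.
  by rewrite inE => /eqP->.
- by case: ifP => [/orP[/eqP->//|//]|_].
Qed.


Let ph r := phi R w a0 r.

Let mph r : measurable_fun setT (fun y => (Num.max (w y - r) 0)%:E).
Proof.
apply/measurable_EFinP; apply: measurable_maxr => //.
by apply: measurable_funB => //; exact: measurable_cst.
Qed.

Let ph_ge0 r : 0 <= ph r.
Proof. by apply: integral_ge0 => y _; rewrite lee_fin le_max lexx orbT. Qed.

Let ph_anti r r' : (r <= r')%R -> ph r' <= ph r.
Proof.
move=> rr; apply: ge0_le_integral => //.
- by move=> y _; rewrite lee_fin le_max lexx orbT.
- by move=> y _; rewrite lee_fin; apply: le_max2 => //; apply: lerB.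
Qed.

Let ph_lip r r' : (r <= r')%R -> ph r <= ph r' + (r' - r)%:E.
Proof.
move=> rr; apply: le_trans (_ : \int[pdist a0]_y ((Num.max (w y - r') 0)%:E + (cst (r' - r)%:E) y) <= _).
  apply: ge0_le_integral => //.
  - by move=> y _; rewrite lee_fin le_max lexx orbT.
  - by apply: emeasurable_funD => //; exact: measurable_cst.
  - move=> y _ /=; rewrite -EFinD lee_fin ge_max; apply/andP; split.
      have h : (w y - r' <= Num.max (w y - r') 0)%R by rewrite le_max lexx.
      lra.
    have : (0 <= Num.max (w y - r')%R 0%R)%R by rewrite le_max lexx orbT.
    lra.
rewrite ge0_integralD //.
- by rewrite int_cst.
- by move=> y _; rewrite lee_fin le_max lexx orbT.
- by move=> y _ /=; rewrite lee_fin subr_ge0.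
Qed.

Let ph_lb r : (r <= 0)%R -> (- r)%:E <= ph r.
Proof.
move=> r0; apply: LEAE_cst_l => // z z0; rewrite lee_fin le_max; apply/orP; left.
have := wpos z z0; lra.
Qed.

Lemma index_exists x : Cset R w a0 x -> exists r, is_index w a0 r /\ (r < w x)%R.
Proof.
case=> x0 hx.
have c0 : (0 <= pcost a0)%R by case: va0.
have fin r : ph r \is a fin_num.
  rewrite ge0_fin_numE //; case: (leP r (w x)) => rx.
    apply: le_lt_trans (ph_lip _ _ rx) _; apply: lte_add_pinfty; last exact: ltey.
    by apply: lt_trans hx _; exact: ltey.
  by apply: le_lt_trans (ph_anti _ _ (ltW rx)) _; apply: lt_trans hx _; exact: ltey.
pose f r := fine (ph r).
have fE r : (f r)%:E = ph r by rewrite /f fineK.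
have f_anti r r' : (r <= r')%R -> (f r' <= f r)%R by move=> rr; rewrite -lee_fin !fE ph_anti.
have f_lip r r' : (r <= r')%R -> (f r <= f r' + (r' - r))%R.
  by move=> rr; rewrite -lee_fin EFinD !fE ph_lip.
have f_lb r : (r <= 0)%R -> (- r <= f r)%R by move=> r0; rewrite -lee_fin fE ph_lb.
have fx : (f (w x) < pcost a0)%R by rewrite -lte_fin fE.
pose E := [set r | (f r <= pcost a0)%R].
have Ex : E (w x) by rewrite /E /= ltW.
have lbE : lbound E (- pcost a0)%R.
  move=> r Er; rewrite leNgt; apply/negP => rlt.
  have := f_lb r (ltW (lt_le_trans rlt _)); move: Er; rewrite /E /=.
  have : (- pcost a0 <= 0)%R by rewrite oppr_le0.
  lra.
have hinf : has_inf E by split; [exists (w x) | exists (- pcost a0)%R].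
pose r0 := inf E.
have r0le r : E r -> (r0 <= r)%R by move=> Er; apply: ge_inf => //; case: hinf.
have fr0 : f r0 = pcost a0.
  apply/le_anti/andP; split.
    apply/ler_addgt0Pr => e e0.
    have [r Er rlt] := inf_adherent e0 hinf.
    have := f_lip _ _ (r0le _ Er); move: Er; rewrite /E /= -/r0; lra.
  rewrite leNgt; apply/negP => lt.
  pose d := (pcost a0 - f r0)%R.
  have d0 : (0 < d)%R by rewrite subr_gt0.
  have : E (r0 - d)%R.
    rewrite /E /=; have := f_lip (r0 - d)%R r0 _; rewrite /d.
    have h : (r0 - (pcost a0 - f r0) <= r0)%R by rewrite lerBlDr lerDl subr_ge0 ltW.
    move=> /(_ h); lra.
  move=> /r0le; rewrite /d; lra.
exists r0; split; last first.
  rewrite lt_neqAle r0le // andbT; apply/eqP => e.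
  by move: fx; rewrite -e fr0 ltxx.
split; first by rewrite -fr0 fE.
move=> r' hr'; apply: r0le; rewrite /E /=.
suff -> : f r' = pcost a0 by [].
by apply/EFin_inj; rewrite fE.
Qed.


Lemma dirac_int x (f : R -> \bar R) : measurable_fun setT f ->
  \int[pdist (dirac_project x)]_z f z = f x.
Proof. by move=> mf; rewrite /dirac_project /= integral_dirac // diracT mul1e. Qed.

Lemma fuel0b N (A : 'I_N -> project R) cc t h (b : R) :
  (0 <= b)%R -> (forall v, v \in map snd h -> (0 <= v)%R /\ (v <= b)%R) ->
  payoff A w cc t 0 h <= (w b)%:E.
Proof.
move=> b0 H /=; case: (t h) => [i|v].
  by case: ifP => _; rewrite lee_fin wmono.
case: ifP => [/orP[/eqP->|/H[v0 vb]]|_]; by rewrite lee_fin wmono.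
Qed.

Lemma meas_eqb (x : R) (a b : \bar R) :
  measurable_fun setT (fun z : R => if x == z then a else b).
Proof.
apply: (@meas_cases _ unit (fun z => if x == z then Some tt else None) _ (cst b) (fun _ => cst a)).
- case=> [[]|].
    rewrite [X in measurable X](_ : _ = [set x]); first exact: measurable_set1.
    by apply/seteqP; split => z /=; [case: eqP|move=> ->; rewrite eqxx].
  rewrite [X in measurable X](_ : _ = ~` [set x]); first by apply: measurableC; exact: measurable_set1.
  apply/seteqP; split => z /=.
    by case: eqP => // xz _ zx; apply: xz.
  by move=> zx; case: eqP => // xz; exfalso; apply: zx.
- exact: measurable_cst.
- move=> _; exact: measurable_cst.
- by move=> z; case: eqP.
Qed.


Definition s1 (x : R) : strategy R 2 := fun h =>
  if h is [::] then Open R (@Ordinal 2 1 isT) else Stop 2 x.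

Section PairS.
Variable x : R.
Hypothesis x0 : (0 <= x)%R.
Hypothesis Cx : Cset R w a0 x.
Let A2 := pair a0 (dirac_project x).
Let j0 : 'I_2 := @Ordinal 2 0 isT.
Let j1 : 'I_2 := @Ordinal 2 1 isT.

Let A2neg i : pdist (A2 i) [set y | (y < 0)%R] = 0.
Proof.
rewrite /A2 /pair; case: ifP => _; first exact: a0neg.
rewrite /dirac_project /= diracE memNset //=.
by apply/negP; rewrite -leNgt.
Qed.

Let s1_pay g cc k h i z : payoff A2 g cc (s1 x) k (rcons h (i, z)) =
  if (x == 0%R) || (x \in map snd (rcons h (i, z))) then (g x)%:E else (g 0%R)%:E.
Proof. by case: h => [|p h]; case: k. Qed.

Let s1_adm : admissible w A2 (s1 x).
Proof.
have gen (g : R -> R) cc k h i : measurable_fun setT (fun z => payoff A2 g cc (s1 x) k (rcons h (i, z))).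
  under eq_fun do rewrite s1_pay map_rcons mem_rcons in_cons.
  case: (x == 0%R) => /=; first exact: measurable_cst.
  case: (x \in map snd h); under eq_fun do rewrite ?orbT ?orbF.
    exact: measurable_cst.
  exact: meas_eqb.
by move=> k h i; split; apply: gen.
Qed.

Let s1_agent : agent_payoff w A2 (s1 x) = (w x)%:E.
Proof.
rewrite /agent_payoff /= dirac_int /=.
  by rewrite in_cons eqxx orbT /= oppr0 adde0.
by have [+ _] := s1_adm 1%N [::] j1; exact.
Qed.

Let c0a0 : (0 <= pcost a0)%R.
Proof. by case: va0. Qed.

Let contra_a0 t : agent_payoff w A2 t <=
    \int[pdist a0]_z (w (Num.max x z))%:E - (pcost a0)%:E ->
  agent_payoff w A2 t < (w x)%:E.
Proof.
move=> H; apply: le_lt_trans H _.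
rewrite (@Kmax R w mw 2 A2 A2neg wmono a0 j0 erefl wpos x x0).
by rewrite lteBlDr // lteD2lE //; case: Cx.
Qed.

Let mwmax : measurable_fun setT (fun z => (w (Num.max x z))%:E).
Proof. by apply/measurable_EFinP; apply: measurableT_comp => //; exact: measurable_maxr. Qed.

Lemma pair_opt_le t : agent_optimal w A2 t -> principal_payoff w A2 t <= (psi R w x)%:E.
Proof.
move=> [adm opt]; have := opt _ s1_adm; rewrite s1_agent => ge.
have wmx z : (0 <= z)%R -> (w x <= w (Num.max x z))%R /\ (w z <= w (Num.max x z))%R /\
    (w 0 <= w (Num.max x z))%R.
  move=> z0; split; [|split]; apply: wmono => //; rewrite ?le_max ?lexx ?orbT //.
  by rewrite x0.
have p0x : (psi R w 0 <= psi R w x)%R by apply: psimono.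
rewrite /principal_payoff /=; case E: (t [::]) => [j|y] /=; last first.
  by case: ifP => [/orP[/eqP->|//]|_]; rewrite lee_fin.
move: ge; rewrite /agent_payoff /= E /= => ge.
case: j E ge => [[|[|j]] hj] // E ge.
- (* opening a0 first: impossible *)
  exfalso; suff : agent_payoff w A2 t < (w x)%:E.
    by rewrite ltNge /agent_payoff /= E /= ge.
  apply: contra_a0; rewrite /agent_payoff /= E /=; apply: leeD => //.
  apply: LEAE => //; first by case: (adm 1%N [::] (Ordinal hj)).
  move=> z z0; case: (t [:: (Ordinal hj, z)]) => [j'|v] /=; last first.
    case: ifP => [/orP[/eqP->|]|_]; rewrite lee_fin; try by case: (wmx z z0) => _ [_ ->].
    by rewrite inE => /eqP->; case: (wmx z z0) => _ [-> _].
  case: j' => [[|[|j']] hj'] //=; rewrite ?inE //=.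
    by rewrite lee_fin; case: (wmx z z0) => _ [_ ->].
  rewrite dirac_int /=; last by case: (adm 0%N [:: (Ordinal hj, z)] (Ordinal hj')).
  rewrite oppr0 adde0.
  apply: (@fuel0b 2 A2 (fun i => pcost (A2 i)) t [:: (Ordinal hj, z); (Ordinal hj', x)] (Num.max x z)).
    by rewrite le_max x0.
  move=> v; rewrite !inE => /orP[/eqP->|/eqP->]; rewrite le_max lexx ?orbT //; split => //.
-
  rewrite dirac_int /=; last by case: (adm 1%N [::] (Ordinal hj)) => _ ?.
  move: ge; rewrite dirac_int /=; last by case: (adm 1%N [::] (Ordinal hj)).
  case E2: (t [:: (Ordinal hj, x)]) => [j'|v] /= ge; last first.
    case: ifP => [/orP[/eqP->|]|_]; rewrite ?lee_fin ?oppr0 ?adde0 ?addr0 //.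
    by rewrite inE => /eqP->; rewrite lexx.
  case: j' E2 ge => [[|[|j']] hj'] //= E2 ge; last by rewrite oppr0 adde0 lee_fin.
  exfalso; move: ge; rewrite oppr0 adde0 => ge.
  suff : agent_payoff w A2 t < (w x)%:E.
    by rewrite ltNge /agent_payoff /= E /= dirac_int /= ?E2 /= ?oppr0 ?adde0 ?ge //;
      case: (adm 1%N [::] (Ordinal hj)).
  apply: contra_a0; rewrite /agent_payoff /= E /= dirac_int /=; last by case: (adm 1%N [::] (Ordinal hj)).
  rewrite E2 /= oppr0 adde0; apply: leeD => //.
  apply: LEAE => //; first by case: (adm 0%N [:: (Ordinal hj, x)] (Ordinal hj')).
  move=> z z0; apply: (@fuel0b 2 A2 (fun i => pcost (A2 i)) t [:: (Ordinal hj, x); (Ordinal hj', z)] (Num.max x z)).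
    by rewrite le_max x0.
  move=> v; rewrite !inE => /orP[/eqP->|/eqP->]; rewrite le_max lexx ?orbT //; split => //.
Qed.

Lemma pair_le : VP_given w (pair a0 (dirac_project x)) <= (psi R w x)%:E.
Proof. by apply: ge_ereal_sup => _ [t topt <-]; exact: pair_opt_le. Qed.

End PairS.

End Final.

Theorem mainTheorem1 (R : realType) (a0 : project R) (w : R -> R) :
  valid_project a0 ->
  measurable_fun setT w ->
  (forall y, 0 <= y -> 0 <= w y) ->
  doubly_monotone w ->
  VP_given w (single a0) = VP w a0 \/
  (forall eps : R, 0 < eps ->
     exists x : R, [/\ 0 <= x,
       (exists r, is_index w a0 r /\ r < w x)
     & (VP_given w (pair a0 (dirac_project x)) < VP w a0 + eps%:E)%E]).
Proof.
move=> va0 mw wpos dm.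
have wmono : forall y y', 0 <= y -> y <= y' -> w y <= w y'.
  by move=> y y' y0 yy; case: (dm y y' y0 yy).
have psimono : forall y y', 0 <= y -> y <= y' -> y - w y <= y' - w y'.
  by move=> y y' y0 yy; case: (dm y y' y0 yy).
have H1 := @VP_le_single R a0 w va0.
have H2 := @single_le R a0 w va0 mw dm.
have H3 : (mine (Jf R w a0 0) (Iv R w a0) <= VP w a0)%E.
  apply: le_ereal_inf_tmp => _ [n [A [vA A0 ->]]].
  apply: (@VPgiven_ge R w mw n.+1 A _ wmono a0 ord0 A0 wpos psimono).
  by move=> i; case: (vA i).
case: (eqVneq (VP_given w (single a0)) (VP w a0)) => [eq|ne]; first by left.
right => eps eps0.
have lt : (VP w a0 < VP_given w (single a0))%E by rewrite lt_neqAle eq_sym ne H1.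
have ltJ := lt_le_trans lt H2.
have IVP : (Iv R w a0 <= VP w a0)%E.
  move: H3; rewrite ge_min => /orP[h|//]; exfalso.
  by move: (le_lt_trans h ltJ); rewrite ltxx.
have Ifin : Iv R w a0 \is a fin_num.
  apply: fin_real; apply/andP; split.
    apply: (@lt_le_trans _ _ ((0 - w 0)%:E)); first exact: ltNyr.
    apply: le_ereal_inf_tmp => _ [x [x0 _] <-]; rewrite lee_fin; exact: psimono.
  apply: le_lt_trans IVP _; apply: lt_le_trans lt _; exact: leey.
have [_ [x Cx <-] ylt] := lb_ereal_inf_adherent eps0 Ifin.
exists x; split; first by case: Cx.
  exact: (@index_exists R a0 w va0 mw wpos x Cx).
apply: le_lt_trans (@pair_le R a0 w va0 mw wpos dm x (proj1 Cx) Cx) _.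
apply: lt_le_trans ylt _; exact: leeD.
Qed.
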